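(* Let $\Omega\subset\mathbb{R}^n$ be a convex open set, let $f:\Omega\to\mathbb{R}$ be bounded, and let $\lambda>0$. Let $\underline f:\overline\Omega\to\mathbb{R}$ be given by $\underline f(x)=\liminf_{y\to x,\,y\in\Omega}f(y)$. Then for every $x\in\Omega$, $$C^l_{\lambda,\Omega}(f^{-}_{\overline\Omega})(x)\le C^l_{\lambda,\Omega}(f)(x)\le C^l_\lambda(f^\infty)(x)\le \underline f(x)\le f(x).$$
   Context: $f^{-}_{\overline\Omega}:\overline\Omega\to\mathbb{R}$ equals $f$ on $\Omega$ and $\inf_\Omega f$ on $\partial\Omega$. $f^\infty:\mathbb{R}^n\to\mathbb{R}\cup\{+\infty\}$ equals $f$ on $\Omega$ and $+\infty$ on $\mathbb{R}^n\setminus\Omega$. For a bounded function $g$ on $\overline\Omega$ and $x\in\overline\Omega$: $M_{\lambda,\Omega}(g)(x)=\inf_{y\in\overline\Omega}\{g(y)+\lambda|y-x|^2\}$, $M^{\lambda}_{\Omega}(g)(x)=\sup_{y\in\overline\Omega}\{g(y)-\lambda|y-x|^2\}$; for $f$ defined only on $\Omega$, $M_{\lambda,\Omega}(f)(x)=\inf_{y\in\Omega}\{f(y)+\lambda|y-x|^2\}$. Local lower transform: $C^l_{\lambda,\Omega}(g)(x)=M^{\lambda}_{\Omega}(M_{\lambda,\Omega}(g))(x)$ for $x\in\overline\Omega$. Global lower transform: $C^l_\lambda(g)(x)=\mathrm{co}[g+\lambda|\cdot|^2](x)-\lambda|x|^2$, where $\mathrm{co}$ is the convex envelope (largest convex function,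 possibly $+\infty$-valued, below the given function). *)

(* Defs.v *)
(* Points of R^n are row vectors 'rV[R]_n, with the
   library topology (equivalent to the Euclidean one); |y - x|^2 is the
   squared Euclidean norm written out explicitly. *)
From HB Require Import structures.
From mathcomp Require Import all_boot all_order all_algebra.
From mathcomp Require Import all_classical all_reals all_analysis.
Set Implicit Arguments. Unset Strict Implicit. Unset Printing Implicit Defensive.
Import Order.TTheory GRing.Theory Num.Theory.
Import numFieldNormedType.Exports.
Local Open Scope classical_set_scope.
Local Open Scope ring_scope.

Section Defs.
Variables (R : realType) (n : nat).
Local Notation V := 'rV[R]_n.

Definition sqnorm (v : V) : R := \sum_(i < n) (v ord0 i) ^+ 2.

Definition edist (x y : V) : R := Num.sqrt (sqnorm (y - x)).

Definition Minf (lam : R) (A : set V) (g : V -> R) (x : V) : R :=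
  inf [set g y + lam * sqnorm (y - x) | y in A].

Definition Msup (lam : R) (A : set V) (g : V -> R) (x : V) : R :=
  sup [set g y - lam * sqnorm (y - x) | y in A].

(* local lower transform: C^l_{lam,Omega}(g) = M^lam_Omega (M_{lam,Omega} g);
   the inner infimum runs over the domain D of g (D = closure Omega for a
   function on closure Omega, D = Omega for f defined on Omega only), the outer
   supremum over closure Omega. *)
Definition lower_local (lam : R) (Omega D : set V) (g : V -> R) (x : V) : R :=
  Msup lam (closure Omega) (Minf lam D g) x.

Definition fminus (Omega : set V) (f : V -> R) : V -> R :=
  fun y => if `[< Omega y >] then f y else inf (f @` Omega).

Definition finfty (Omega : set V) (f : V -> R) : V -> \bar R :=
  fun y => if `[< Omega y >] then (f y)%:E else +oo%E.

Definition econvex (h : V -> \bar R) : Prop :=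
  (forall x, h x != -oo%E) /\
  forall (x y : V) (t : R), 0 < t < 1 ->
    (h ((t *: x + (1 - t) *: y)%R) <= t%:E * h x + (1 - t)%:E * h y)%E.

Definition conv_env (F : V -> \bar R) (x : V) : \bar R :=
  ereal_sup [set h x | h in [set h | econvex h /\ forall y, (h y <= F y)%E]].

Definition lower_global (lam : R) (g : V -> \bar R) (x : V) : \bar R :=
  (conv_env (fun y => g y + (lam * sqnorm y)%:E) x - (lam * sqnorm x)%:E)%E.

(* liminf_{y -> x, y in Omega} f(y)  (y = x allowed) *)
Definition liminf_in (Omega : set V) (f : V -> R) (x : V) : R :=
  sup [set inf [set f y | y in [set y | Omega y /\ edist x y < r]]
      | r in [set r : R | 0 < r]].

End Defs.

(* Main.v *)
Require Import Defs.
From HB Require Import structures.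
From mathcomp Require Import all_boot all_order all_algebra.
From mathcomp Require Import all_classical all_reals all_analysis.
From mathcomp Require Import ring lra.
Import Order.TTheory GRing.Theory Num.Theory.
Import numFieldNormedType.Exports.
Local Open Scope classical_set_scope.
Local Open Scope ring_scope.

Section Aux.
Variables (R : realType) (n : nat).
Local Notation V := 'rV[R]_n.

Lemma sqnorm_ge0 (v : V) : 0 <= sqnorm v.
Proof. by apply: sumr_ge0 => i _; exact: sqr_ge0. Qed.

Lemma sqnormBC (x y : V) : sqnorm (x - y) = sqnorm (y - x).
Proof. by apply: eq_bigr => i _; rewrite !mxE; ring. Qed.

Lemma sqnorm0 : sqnorm (0 : V) = 0.
Proof. by apply: big1 => i _; rewrite mxE; ring. Qed.

Lemma entry_le_sqnorm (v : V) i : v ord0 i ^+ 2 <= sqnorm v.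
Proof.
rewrite /sqnorm (bigD1 i) //= lerDl; apply: sumr_ge0 => j _; exact: sqr_ge0.
Qed.

Lemma entry_le_sqrt (v : V) i : `|v ord0 i| <= Num.sqrt (sqnorm v).
Proof. by rewrite -sqrtr_sqr ler_sqrt ?sqnorm_ge0 // entry_le_sqnorm. Qed.

Lemma sqnorm_affine (a b y : V) (t : R) :
  sqnorm (t *: a + (1 - t) *: b) - sqnorm (t *: a + (1 - t) *: b - y)
  = t * (sqnorm a - sqnorm (a - y)) + (1 - t) * (sqnorm b - sqnorm (b - y)).
Proof.
rewrite /sqnorm -!sumrB !mulr_sumr -big_split /=.
by apply: eq_bigr => i _; rewrite !mxE; ring.
Qed.

Lemma sqnorm_key (x y : V) (t : R) : t != 0 ->
  (1 - t) * sqnorm y + t * sqnorm (x + ((1 - t) / t) *: (x - y))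
  = sqnorm x + ((1 - t) / t) * sqnorm (y - x).
Proof.
move=> t0; rewrite /sqnorm !mulr_sumr -!big_split /=.
by apply: eq_bigr => i _; rewrite !mxE; field.
Qed.

Lemma key_comb (x y : V) (t : R) : t != 0 ->
  x = (1 - t) *: y + (1 - (1 - t)) *: (x + ((1 - t) / t) *: (x - y)).
Proof. by move=> t0; apply/rowP => i; rewrite !mxE; field. Qed.


Lemma inf_ball_le (Omega : set V) (f : V -> R) (M : R) x (r : R) :
  (forall y, Omega y -> `|f y| <= M) -> Omega x -> 0 < r ->
  inf [set f y | y in [set y | Omega y /\ Defs.edist x y < r]] <= f x.
Proof.
move=> fM Ox r0; apply: ge_inf.
  exists (-M) => _ [y [Oy _] <-].
  by have := fM y Oy; rewrite ler_norml => /andP[].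
by exists x => //; split => //; rewrite /Defs.edist subrr sqnorm0 sqrtr0.
Qed.

Lemma part4 (Omega : set V) (f : V -> R) (M : R) x :
  (forall y, Omega y -> `|f y| <= M) -> Omega x ->
  liminf_in Omega f x <= f x.
Proof.
move=> fM Ox; apply: ge_sup; first by eexists; exists 1 => //; exact: ltr01.
by move=> _ [r r0 <-]; exact: (inf_ball_le _ _ _ _ _ fM Ox r0).
Qed.


Lemma part1 (Omega : set V) (f : V -> R) (M lam : R) x :
  (forall y, Omega y -> `|f y| <= M) -> 0 < lam -> Omega x ->
  lower_local lam Omega (closure Omega) (fminus Omega f) x
    <= lower_local lam Omega Omega f x.
Proof.
move=> fM lam0 Ox.
have lbM y : Omega y -> -M <= f y by move/fM; rewrite ler_norml => /andP[].
have lbfm y : -M <= fminus Omega f y.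
  rewrite /fminus; case: asboolP => [/lbM//|_]; apply: lb_le_inf.
    by exists (f x), x.
  by move=> _ [z Oz <-]; exact: lbM.
have G2ub y : Minf lam Omega f y <= f x + lam * sqnorm (x - y).
  apply: ge_inf; last by exists x.
  exists (-M) => _ [z Oz <-]; have := lbM z Oz; have := sqnorm_ge0 (z - y).
  nra.
rewrite /lower_local /Msup.
apply: ge_sup.
  eexists; exists x => //; exact: subset_closure.
move=> _ [y cy <-].
have hub : has_ubound [set Minf lam Omega f y0 - lam * sqnorm (y0 - x) | y0 in closure Omega].
  by exists (f x) => _ [z _ <-]; have := G2ub z; rewrite sqnormBC; lra.
apply: (@le_trans _ _ (Minf lam Omega f y - lam * sqnorm (y - x))); last first.
  by apply: ub_le_sup => //; exists y.
rewrite lerD2r.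
apply: lb_le_inf; first by exists (f x + lam * sqnorm (x - y)), x.
move=> _ [z Oz <-]; apply: ge_inf.
  exists (-M) => _ [w _ <-]; have := lbfm w; have := sqnorm_ge0 (w - y); nra.
by exists z; [exact: subset_closure | rewrite /fminus asboolT].
Qed.


Lemma part2 (Omega : set V) (f : V -> R) (M lam : R) x :
  (forall y, Omega y -> `|f y| <= M) -> 0 < lam -> Omega x ->
  ((lower_local lam Omega Omega f x)%:E
          <= lower_global lam (finfty Omega f) x)%E.
Proof.
move=> fM lam0 Ox.
have lbM y : Omega y -> -M <= f y by move/fM; rewrite ler_norml => /andP[].
have key y : ((Minf lam Omega f y - lam * sqnorm (y - x))%:E
               <= lower_global lam (finfty Omega f) x)%E.
  rewrite /lower_global.
  set F := (fun y0 => _).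
  pose m := Minf lam Omega f y.
  pose phi := fun w : V => ((m - lam * sqnorm (w - y) + lam * sqnorm w)%:E).
  have phiC : econvex phi.
    split => // a b t _; rewrite /phi -!EFinM -EFinD lee_fin.
    have E := sqnorm_affine a b y t.
    have E' := congr1 (fun v => lam * v) E; simpl in E'.
    lra.
  have phiF w : (phi w <= F w)%E.
    rewrite /F /finfty; case: asboolP => Ow; last by rewrite leey.
    rewrite /phi -EFinD lee_fin.
    have : m <= f w + lam * sqnorm (w - y).
      apply: ge_inf; last by exists w.
      exists (-M) => _ [z Oz <-]; have := lbM z Oz; have := sqnorm_ge0 (z - y).
      nra.
    lra.
  have := @ereal_sup_ubound _ [set h x | h in [set h | econvex h /\ forall y, (h y <= F y)%E]] (phi x).
  move=> H; rewrite leeBrDr //; apply: le_trans (H _); last by exists phi.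
  by rewrite /phi -EFinD lee_fin sqnormBC.
rewrite /lower_local /Msup.
case E: (lower_global lam (finfty Omega f) x) => [l| |].
- rewrite lee_fin; apply: ge_sup.
    eexists; exists x => //; exact: subset_closure.
  by move=> _ [y _ <-]; rewrite -lee_fin -E; exact: key.
- by rewrite leey.
- by have := key x; rewrite E.
Qed.


Lemma part3_real (Omega : set V) (f : V -> R) (M lam : R) x (hx : R) :
  open Omega -> (forall y, Omega y -> `|f y| <= M) -> 0 < lam -> Omega x ->
  (forall y z t, Omega y -> Omega z -> 0 < t < 1 -> x = t *: y + (1 - t) *: z ->
     hx <= t * (f y + lam * sqnorm y) + (1 - t) * (f z + lam * sqnorm z)) ->
  hx - lam * sqnorm x <= liminf_in Omega f x.
Proof.
move=> Oo fM lam0 Ox conv.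
have lbM y : Omega y -> -M <= f y by move/fM; rewrite ler_norml => /andP[].
have ubM y : Omega y -> f y <= M by move/fM; rewrite ler_norml => /andP[].
have M0 : 0 <= M by apply: le_trans (fM x Ox).
have [d d0 dsub] : exists2 d : R, 0 < d &
    forall y : V, (forall i, `|x ord0 i - y ord0 i| < d) -> Omega y.
  have := Oo x Ox; move/nbhs_ballP => [d d0 sub]; exists d => // y H; apply: sub.
  by split => // i j; rewrite (ord1 i) /ball /=; exact: H.
apply/ler_addgt0Pr => e e0.
pose t := Num.min (1/2) (e / (4 * (M + 1))).
have t0 : 0 < t by rewrite lt_min; apply/andP; split; [lra | apply: divr_gt0 => //; lra].
have th : t <= 1/2 by rewrite ge_min lexx.
have te : t <= e / (4 * (M + 1)) by rewrite ge_min lexx orbT.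
have tM : t * M <= e / 4.
  have : t * (4 * (M + 1)) <= e by rewrite -ler_pdivlMr //; lra.
  nra.
pose s := (1 - t) / t.
have s0 : 0 <= s by apply: divr_ge0; lra.
have st : s * t = 1 - t by rewrite /s divfK // gt_eqF.
pose r := Num.min (t * d) (Num.min 1 (e * t / (2 * lam))).
have r0 : 0 < r.
  rewrite !lt_min; apply/and3P; split; [exact: mulr_gt0 | exact: ltr01 |].
  apply: divr_gt0; [exact: mulr_gt0 | lra].
have rtd : r <= t * d by rewrite ge_min lexx.
have r1 : r <= 1 by rewrite !ge_min lexx orbT.
have re : r <= e * t / (2 * lam) by rewrite !ge_min lexx !orbT.
have HI : hx - lam * sqnorm x - e <=
    inf [set f y | y in [set y | Omega y /\ Defs.edist x y < r]].
  apply: lb_le_inf.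
    by exists (f x), x => //; split => //; rewrite /Defs.edist subrr sqnorm0 sqrtr0.
  move=> _ [y [Oy dy] <-].
  have entry i : `|y ord0 i - x ord0 i| < r.
    by have := entry_le_sqrt (y - x) i; rewrite !mxE => H; exact: le_lt_trans H dy.
  pose z := x + s *: (x - y).
  have Oz : Omega z.
    apply: dsub => i; rewrite /z !mxE opprD addrA subrr add0r normrN normrM.
    rewrite (ger0_norm s0) distrC.
    have := entry i; have := ler_wpM2l s0 (ltW (entry i)).
    nra.
  have sd : sqnorm (y - x) < r ^+ 2.
    move: dy; rewrite /Defs.edist => dy.
    have q0 := sqrtr_ge0 (sqnorm (y - x)).
    have q2 := sqr_sqrtr (sqnorm_ge0 (y - x)).
    rewrite -q2; nra.
  have t01 : 0 < 1 - t < 1 by apply/andP; split; lra.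
  have := conv y z (1 - t) Oy Oz t01 (key_comb x y t (lt0r_neq0 t0)).
  have Eq := sqnorm_key x y t (lt0r_neq0 t0).
  have Eq' := congr1 (fun v => lam * v) Eq; simpl in Eq'.
  rewrite -/s -/z in Eq'.
  have H1 : t * f z <= t * M by apply: ler_wpM2l; [lra | exact: ubM].
  have H2 : - (t * f y) <= t * M by rewrite -mulrN; apply: ler_wpM2l; [lra | rewrite lerNl; exact: lbM].
  have H3 : lam * (s * sqnorm (y - x)) <= e / 2.
    have D0 := sqnorm_ge0 (y - x).
    have : sqnorm (y - x) <= e * t / (2 * lam).
      apply: le_trans (ltW sd) _; apply: le_trans re; nra.
    rewrite ler_pdivlMr; last lra.
    move=> HD.
    have : s * (sqnorm (y - x) * (2 * lam)) <= s * (e * t) by apply: ler_wpM2l.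
    nra.
  have e1 : 1 - (1 - t) = t by ring.
  rewrite e1.
  nra.
apply: (@le_trans _ _ (inf [set f y | y in [set y | Omega y /\ Defs.edist x y < r]] + e)).
  lra.
rewrite lerD2r; apply: ub_le_sup; last by exists r.
exists (f x) => _ [r' r'0 <-]; exact: (inf_ball_le _ _ _ _ _ fM Ox r'0).
Qed.


Lemma part3 (Omega : set V) (f : V -> R) (M lam : R) x :
  open Omega -> (forall y, Omega y -> `|f y| <= M) -> 0 < lam -> Omega x ->
  (lower_global lam (finfty Omega f) x <= (liminf_in Omega f x)%:E)%E.
Proof.
move=> Oo fM lam0 Ox.
rewrite /lower_global leeBlDr // -EFinD.
apply: ge_ereal_sup => _ [h [[hnoo hconv] hF] <-].
have hxF := hF x; rewrite /finfty asboolT //= in hxF.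
case Ehx: (h x) hxF => [hx| |] //; last by have := hnoo x; rewrite Ehx.
rewrite -EFinD !lee_fin => hxF.
suff: hx - lam * sqnorm x <= liminf_in Omega f x by lra.
apply: (part3_real _ _ _ _ _ _ Oo fM lam0 Ox) => y z t Oy Oz t01 Ex.
have := hconv y z t t01; rewrite -Ex Ehx => H.
rewrite -lee_fin; apply: le_trans H _.
case/andP: t01 => t0 t1.
have Fy := hF y; have Fz := hF z.
rewrite /finfty !asboolT // in Fy Fz.
apply: (@le_trans _ _ (t%:E * ((f y)%:E + (lam * sqnorm y)%:E)
   + (1 - t)%:E * ((f z)%:E + (lam * sqnorm z)%:E))%E).
  by apply: leeD; apply: lee_wpmul2l => //; rewrite lee_fin; lra.
exact: lexx.
Qed.

End Aux.

Theorem proposition2p9 (R : realType) (n : nat) (Omega : set 'rV[R]_n)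
    (f : 'rV[R]_n -> R) (lam : R) :
  open Omega ->
  convex_set (Omega : set (convex_lmodType 'rV[R]_n)) ->
  (exists M : R, forall y, Omega y -> `|f y| <= M) ->
  0 < lam ->
  forall x, Omega x ->
    lower_local lam Omega (closure Omega) (fminus Omega f) x
      <= lower_local lam Omega Omega f x
    /\ ((lower_local lam Omega Omega f x)%:E
          <= lower_global lam (finfty Omega f) x)%E
    /\ (lower_global lam (finfty Omega f) x <= (liminf_in Omega f x)%:E)%E
    /\ liminf_in Omega f x <= f x.
Proof.
move=> Oo _ [M fM] lam0 x Ox; split; [|split; [|split]].
- exact: (part1 _ _ _ _ _ _ _ fM lam0 Ox).
- exact: (part2 _ _ _ _ _ _ _ fM lam0 Ox).
- exact: (part3 _ _ _ _ _ _ _ Oo fM lam0 Ox).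
- exact: (part4 _ _ _ _ _ _ fM Ox).
Qed.
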